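(* Let $\Bbbk$ be a field, $V$ a finite-dimensional $\Bbbk$-vector space with $\dim V>1$ and $R$ a Hecke symmetry on $V$ with parameter $q$. Suppose $\dim\Upsilon^{(3)}=1$. Then the action of $y_3$ on $V^{\otimes3}$ is nonzero.
   Context: A Hecke symmetry on $V$ with parameter $0\neq q\in\Bbbk$ is a linear map $R:V\otimes V\to V\otimes V$ satisfying $(R\otimes\mathrm{Id}_V)(\mathrm{Id}_V\otimes R)(R\otimes\mathrm{Id}_V)=(\mathrm{Id}_V\otimes R)(R\otimes\mathrm{Id}_V)(\mathrm{Id}_V\otimes R)$ and $(R-q\,\mathrm{Id})(R+\mathrm{Id})=0$ ($q=-1$ allowed). On $V^{\otimes 3}$ let $R_1=R\otimes\mathrm{Id}_V$, $R_2=\mathrm{Id}_V\otimes R$. $\Upsilon^{(3)}=(R_1-q\,\mathrm{Id})V^{\otimes3}\cap(R_2-q\,\mathrm{Id})V^{\otimes3}$. $y_3=\sum_{\sigma\in S_3}(-1)^{\ell(\sigma)}q^{3-\ell(\sigma)}T_\sigma$ in the Hecke algebra ${\cal H}_3$ (generators $T_1,T_2$, relations $T_1T_2T_1=T_2T_1T_2$, $(T_i-q)(T_i+1)=0$; $T_\sigma$ is the product of generators along a reduced expression of $\sigma$ in $\tau_1=(12),\tau_2=(23)$, $\ell$ the length), acting on $V^{\otimes3}$ via $T_i\mapsto R_i$. Explicitly $y_3=q^3-q^2(T_1+T_2)+q(T_1T_2+T_2T_1)-T_1T_2T_1$. *)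

(* Defs.v *)
(* V = 'rV[F]_n (row vectors, linear maps act on the right:
   v |-> v *m A), V^{(x)2} = 'rV_(n*n), V^{(x)3} = 'rV_(n*n*n), using the
   standard Kronecker tensor product of matrices [A *t B] from
   mathcomp.real_closed.mxtens (index (i,j) |-> i*p + j). *)
From HB Require Import structures.
From mathcomp Require Import all_boot all_order all_algebra.
From mathcomp Require Import mxtens.
Set Implicit Arguments. Unset Strict Implicit. Unset Printing Implicit Defensive.
Import GRing.Theory.
Local Open Scope ring_scope.

Definition hR1 (F : fieldType) (n : nat) (R : 'M[F]_(n * n)) : 'M[F]_(n * n * n) :=
  R *t (1%:M : 'M[F]_n).

(* R_2 = Id_V (x) R on V^{(x)3} = V (x) (V (x) V), transported to (V (x) V) (x) V
   by the associativity identification (indices agree: (i*n+j)*n+k = i*(n*n)+(j*n+k)). *)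
Definition hR2 (F : fieldType) (n : nat) (R : 'M[F]_(n * n)) : 'M[F]_(n * n * n) :=
  castmx (mulnA n n n, mulnA n n n) ((1%:M : 'M[F]_n) *t R).

Definition is_hecke_symmetry (F : fieldType) (n : nat) (q : F) (R : 'M[F]_(n * n)) :=
  hR1 R *m hR2 R *m hR1 R = hR2 R *m hR1 R *m hR2 R /\
  (R - q%:M) *m (R + 1%:M) = 0.

Definition Upsilon3 (F : fieldType) (n : nat) (q : F) (R : 'M[F]_(n * n)) :=
  ((hR1 R - q%:M) :&: (hR2 R - q%:M))%MS.

Definition y3_action (F : fieldType) (n : nat) (q : F) (R : 'M[F]_(n * n)) : 'M[F]_(n * n * n) :=
  q ^+ 3 *: 1%:M - q ^+ 2 *: (hR1 R + hR2 R)
  + q *: (hR1 R *m hR2 R + hR2 R *m hR1 R) - hR1 R *m hR2 R *m hR1 R.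

(* Main.v *)
Require Import Defs.
From HB Require Import structures.
From mathcomp Require Import all_boot all_order all_algebra.
From mathcomp Require Import mxtens.
From mathcomp Require Import ring.
Import GRing.Theory.
Local Open Scope ring_scope.

Lemma tensmxDl (F : comPzRingType) m n p r (A B : 'M[F]_(m,n)) (C : 'M[F]_(p,r)) :
  (A + B) *t C = A *t C + B *t C.
Proof. by apply/matrixP=> i j; rewrite !mxE mulrDl. Qed.

Lemma tensmxDr (F : comPzRingType) m n p r (A : 'M[F]_(m,n)) (B C : 'M[F]_(p,r)) :
  A *t (B + C) = A *t B + A *t C.
Proof. by apply/matrixP=> i j; rewrite !mxE mulrDr. Qed.

Lemma tensmxNl (F : comPzRingType) m n p r (A : 'M[F]_(m,n)) (C : 'M[F]_(p,r)) :
  (- A) *t C = - (A *t C).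
Proof. by apply/matrixP=> i j; rewrite !mxE mulNr. Qed.

Lemma tensmxNr (F : comPzRingType) m n p r (A : 'M[F]_(m,n)) (C : 'M[F]_(p,r)) :
  A *t (- C) = - (A *t C).
Proof. by apply/matrixP=> i j; rewrite !mxE mulrN. Qed.

Lemma tensmxBl (F : comPzRingType) m n p r (A B : 'M[F]_(m,n)) (C : 'M[F]_(p,r)) :
  (A - B) *t C = A *t C - B *t C.
Proof. by rewrite tensmxDl tensmxNl. Qed.

Lemma tensmxBr (F : comPzRingType) m n p r (A : 'M[F]_(m,n)) (B C : 'M[F]_(p,r)) :
  A *t (B - C) = A *t B - A *t C.
Proof. by rewrite tensmxDr tensmxNr. Qed.

Lemma tensmxZl (F : comPzRingType) m n p r (a : F) (A : 'M[F]_(m,n)) (C : 'M[F]_(p,r)) :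
  (a *: A) *t C = a *: (A *t C).
Proof. by apply/matrixP=> i j; rewrite !mxE mulrA. Qed.

Lemma tensmxZr (F : comPzRingType) m n p r (a : F) (A : 'M[F]_(m,n)) (C : 'M[F]_(p,r)) :
  A *t (a *: C) = a *: (A *t C).
Proof. by apply/matrixP=> i j; rewrite !mxE mulrCA. Qed.

Lemma tens11 (F : comPzRingType) m n :
  (1%:M : 'M[F]_m) *t (1%:M : 'M[F]_n) = 1%:M.
Proof.
apply/matrixP=> i j.
case: (mxtens_indexP i)=> i1 i2; case: (mxtens_indexP j)=> j1 j2.
rewrite tensmxE !mxE -natrM mulnb; congr (_%:R).
by rewrite (can_eq (@mxtens_indexK _ _)) xpair_eqE.
Qed.

Lemma idxA m1 m2 m3 (e : (m1 * (m2 * m3) = m1 * m2 * m3)%N) (i : 'I_m1) (j : 'I_m2) (l : 'I_m3) :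
  cast_ord e (mxtens_index (i, mxtens_index (j, l))) = mxtens_index (mxtens_index (i, j), l).
Proof. by apply: val_inj=> /=; rewrite mulnDl mulnA addnA. Qed.

Lemma tensA (F : comPzRingType) m1 n1 m2 n2 m3 n3
  (A : 'M[F]_(m1,n1)) (B : 'M[F]_(m2,n2)) (C : 'M[F]_(m3,n3)) {e1 e2} :
  (A *t B) *t C = castmx (e1, e2) (A *t (B *t C)).
Proof.
apply/matrixP=> i j.
case: (mxtens_indexP i)=> i12 i3; case: (mxtens_indexP i12)=> i1 i2.
case: (mxtens_indexP j)=> j12 j3; case: (mxtens_indexP j12)=> j1 j2.
rewrite castmxE !tensmxE.
have -> : cast_ord (esym e1) (mxtens_index (mxtens_index (i1, i2), i3))
   = mxtens_index (i1, mxtens_index (i2, i3)).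
  by apply: val_inj=> /=; rewrite mulnDl mulnA addnA.
have -> : cast_ord (esym e2) (mxtens_index (mxtens_index (j1, j2), j3))
   = mxtens_index (j1, mxtens_index (j2, j3)).
  by apply: val_inj=> /=; rewrite mulnDl mulnA addnA.
by rewrite !tensmxE mulrA.
Qed.

Lemma castmx_irr {T : Type} {m n m' n' : nat} (e1 e1' : m = m') (e2 e2' : n = n') (A : 'M[T]_(m,n)) :
  castmx (e1, e2) A = castmx (e1', e2') A.
Proof. by rewrite (eq_irrelevance e1 e1') (eq_irrelevance e2 e2'). Qed.

Lemma castmx_tensl (F : comPzRingType) m n m' n' p r (e1 : m = m') (e2 : n = n')
   {f1 : (m * p = m' * p)%N} {f2 : (n * r = n' * r)%N} (A : 'M[F]_(m,n)) (B : 'M[F]_(p,r)) :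
  castmx (e1, e2) A *t B = castmx (f1, f2) (A *t B).
Proof.
case: m' / e1 f1; case: n' / e2 f2 => f2 f1.
by rewrite castmx_id (castmx_irr f1 erefl f2 erefl) castmx_id.
Qed.

Lemma castmx_tensr (F : comPzRingType) m n m' n' p r (e1 : m = m') (e2 : n = n')
   {f1 : (p * m = p * m')%N} {f2 : (r * n = r * n')%N} (A : 'M[F]_(m,n)) (B : 'M[F]_(p,r)) :
  B *t castmx (e1, e2) A = castmx (f1, f2) (B *t A).
Proof.
case: m' / e1 f1; case: n' / e2 f2 => f2 f1.
by rewrite castmx_id (castmx_irr f1 erefl f2 erefl) castmx_id.
Qed.

Lemma castmx_mulsq (F : pzRingType) m m' (e : m = m') (A B : 'M[F]_m) :
  castmx (e, e) (A *m B) = castmx (e, e) A *m castmx (e, e) B.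
Proof. by case: m' / e; rewrite !castmx_id. Qed.

Definition y3gen {F : pzRingType} {k : nat} (q : F) (A B : 'M[F]_k) : 'M[F]_k :=
  q ^+ 3 *: 1%:M - q ^+ 2 *: (A + B) + q *: (A *m B + B *m A) - A *m B *m A.

Lemma y3gen_cast (F : pzRingType) k k' (e : k = k') (q : F) (A B : 'M[F]_k) :
  castmx (e, e) (y3gen q A B) = y3gen q (castmx (e, e) A) (castmx (e, e) B).
Proof. by case: k' / e; rewrite !castmx_id. Qed.

Lemma y3gen_tens1 (F : comPzRingType) m k (q : F) (A B : 'M[F]_k) :
  (1%:M : 'M_m) *t y3gen q A B = y3gen q (1%:M *t A) (1%:M *t B).
Proof.
by rewrite /y3gen !(tensmxBr, tensmxDr, tensmxNr, tensmxZr) !tensmx_mul !mul1mx tens11.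
Qed.

Lemma mul_y3gen (F : comPzRingType) k (q : F) (A B : 'M[F]_k) (w : 'rV[F]_k) :
  w *m y3gen q A B = q ^+ 3 *: w - q ^+ 2 *: (w *m A + w *m B)
     + q *: (w *m A *m B + w *m B *m A) - w *m A *m B *m A.
Proof.
rewrite /y3gen !mulmxBr !mulmxDr !mulmxN -!scalemxAr !mulmxDr mulmx1 !mulmxA.
by [].
Qed.

Lemma sum_idx (F : comPzRingType) m k (G : 'I_(m * k) -> F) :
  \sum_l G l = \sum_a \sum_b G (mxtens_index (a, b)).
Proof.
rewrite pair_big /=; apply: reindex => /=.
by exists (@mxtens_unindex m k) => x _; rewrite ?mxtens_indexK ?mxtens_unindexK //; case: x.
Qed.

Definition blk {F : Type} {m k : nat} (w : 'rV[F]_(m * k)) (i : 'I_m) : 'rV[F]_k :=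
  \row_j w 0 (mxtens_index (i, j)).

Lemma blk_mul (F : comPzRingType) m k (w : 'rV[F]_(m * k)) (B : 'M[F]_k) i j :
  (w *m (1%:M *t B)) 0 (mxtens_index (i, j)) = (blk w i *m B) 0 j.
Proof.
rewrite [LHS]mxE [RHS]mxE sum_idx (bigD1 i) //=.
rewrite [X in _ + X]big1 ?addr0.
  by apply: eq_bigr => b _; rewrite tensmxE !mxE eqxx mulr1n mul1r.
move=> a ne; apply: big1 => b _.
by rewrite tensmxE mxE (negbTE ne) mulr0n mul0r mulr0.
Qed.

Lemma blk_eigL (F : comPzRingType) m k (w : 'rV[F]_(m * k)) (B : 'M[F]_k) (c : F) :
  w *m (1%:M *t B) = c *: w -> forall i, blk w i *m B = c *: blk w i.
Proof.
move=> H i; apply/rowP=> j; rewrite -blk_mul H !mxE //.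
Qed.

Lemma blk_eigR (F : comPzRingType) m k (w : 'rV[F]_(m * k)) (B : 'M[F]_k) (c : F) :
  (forall i, blk w i *m B = c *: blk w i) -> w *m (1%:M *t B) = c *: w.
Proof.
move=> H; apply/rowP=> l; case: (mxtens_indexP l) => i j.
by rewrite blk_mul H !mxE.
Qed.

Lemma eig_castL (F : pzRingType) k r (e : k = r) (X : 'rV[F]_r) (A : 'M[F]_k) (c : F) :
  X *m castmx (e, e) A = c *: X ->
  castmx (erefl, esym e) X *m A = c *: castmx (erefl, esym e) X.
Proof. by case: r / e in X *; rewrite !castmx_id. Qed.

Lemma eig_castR (F : pzRingType) k r (e : k = r) (X : 'rV[F]_r) (A : 'M[F]_k) (c : F) :
  castmx (erefl, esym e) X *m A = c *: castmx (erefl, esym e) X ->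
  X *m castmx (e, e) A = c *: X.
Proof. by case: r / e in X *; rewrite !castmx_id. Qed.

Lemma eig_sub (F : fieldType) k (q : F) (M : 'M[F]_k) (w : 'rV[F]_k) :
  q + 1 != 0 -> w *m M = - w -> (w <= M - q%:M)%MS.
Proof.
move=> q1 H.
have E : w *m (M - q%:M) = (- (q + 1)) *: w.
  by rewrite mulmxBr H mul_mx_scalar; apply/rowP=> j; rewrite !mxE; ring.
have -> : w = (- (q + 1))^-1 *: (w *m (M - q%:M)).
  by rewrite E scalerA mulVf ?scale1r // oppr_eq0.
exact: scalemx_sub (submxMl _ _).
Qed.

Definition quad {F : pzRingType} {k : nat} (q : F) (A : 'M[F]_k) :=
  A *m A = (q - 1) *: A + q *: 1%:M.

Lemma sub_eig (F : fieldType) k (q : F) (M : 'M[F]_k) (w : 'rV[F]_k) :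
  quad q M -> (w <= M - q%:M)%MS -> w *m M = - w.
Proof.
move=> HM /submxP [y ->].
rewrite -mulmxA mulmxBl HM mul_scalar_mx -mulmxN; congr (_ *m _).
by apply/matrixP=> i j; rewrite !mxE; ring.
Qed.

Lemma quad_cast (F : pzRingType) k r (e : k = r) (q : F) (A : 'M[F]_k) :
  quad q A -> quad q (castmx (e, e) A).
Proof. by case: r / e; rewrite castmx_id. Qed.

Lemma quad_tensl (F : comPzRingType) k m (q : F) (A : 'M[F]_k) :
  quad q A -> quad q (A *t (1%:M : 'M_m)).
Proof.
by rewrite /quad tensmx_mul mulmx1 => ->; rewrite tensmxDl !tensmxZl tens11.
Qed.

Lemma quad_tensr (F : comPzRingType) k m (q : F) (A : 'M[F]_k) :
  quad q A -> quad q ((1%:M : 'M_m) *t A).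
Proof.
by rewrite /quad tensmx_mul mulmx1 => ->; rewrite tensmxDr !tensmxZr tens11.
Qed.

Lemma quad_hecke (F : fieldType) k (q : F) (R : 'M[F]_k) :
  (R - q%:M) *m (R + 1%:M) = 0 -> quad q R.
Proof.
rewrite mulmxBl !mulmxDr mulmx1 mul_scalar_mx mulmx1 /quad.
move: (R *m R) => RR E; apply/matrixP=> i j.
move/matrixP/(_ i j): E; rewrite !mxE => E.
apply/eqP; rewrite -subr_eq0; apply/eqP; rewrite -E; ring.
Qed.

Lemma exists_nz (F : fieldType) k (u : 'rV[F]_k) : u != 0 -> exists j, u 0 j != 0.
Proof.
move=> u0; apply/existsP; apply: contraR u0 => /existsPn H.
apply/eqP/rowP => j; rewrite mxE; move: (H j); by rewrite negbK => /eqP.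
Qed.

Lemma step2 (F : fieldType) k (q : F) (M1 M2 : 'M[F]_k) (u : 'rV[F]_k) :
  u != 0 -> (u <= M1 - q%:M)%MS -> u *m M2 = - u -> u *m M1 = - u ->
  y3gen q M1 M2 = 0 -> q ^+ 2 + q + 1 = 0.
Proof.
move=> u0 /submxP [y uy] h2 h1 hy.
have E3 := congr1 (mulmx y) hy; rewrite mul_y3gen mulmx0 in E3.
have E2 : u *m M2 *m M1 = u by rewrite h2 mulNmx h1 opprK.
have [j hj] := exists_nz _ _ _ u0.
rewrite uy mulmxBr mul_mx_scalar in h2 E2 hj.
rewrite !mulmxBl -!scalemxAl in h2 E2.
move: h2 E2 E3 hj.
move: (y *m M1 *m M2 *m M1) => f; move: (y *m M2 *m M1) => e.
move: (y *m M1 *m M2) => d; move: (y *m M2) => c; move: (y *m M1) => b.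
move=> h2 E2 E3 hj.
move/rowP/(_ j): h2; move/rowP/(_ j): E2; move/rowP/(_ j): E3.
rewrite !mxE in hj; rewrite !mxE => E3 E2 h2.
move: (y 0 j) (b 0 j) (c 0 j) (d 0 j) (e 0 j) (f 0 j) E3 E2 h2 hj.
move=> y0 b0 c0 d0 e0 f0 E3 E2 h2 hj.
have Ef : f0 = b0 - q * y0 + q * e0.
  by rewrite -E2; ring.
have Ed : d0 = q * c0 - (b0 - q * y0).
  by rewrite -h2; ring.
rewrite Ef Ed in E3.
have : - ((q ^+ 2 + q + 1) * (b0 - q * y0)) = 0 by rewrite -E3; ring.
move/eqP; rewrite oppr_eq0 mulf_eq0 (negbTE hj) orbF => /eqP //.
Qed.


Lemma q1_nz (F : fieldType) (q : F) : q ^+ 2 + q + 1 = 0 -> q + 1 != 0.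
Proof.
move=> hq; apply/eqP => E.
have : q ^+ 2 + q + 1 = q * (q + 1) + 1 by ring.
by rewrite E mulr0 add0r hq => /eqP; rewrite eq_sym oner_eq0.
Qed.

Lemma key4 (F : fieldType) k (q : F) (X : 'rV[F]_k) (S1 S2 S3 : 'M[F]_k) :
  q ^+ 2 + q + 1 = 0 -> X *m S1 = - X -> X *m S2 = - X ->
  X *m S3 *m S1 = - (X *m S3) ->
  X *m y3gen q S2 S3 = 0 -> S1 *m S2 *m S1 = S2 *m S1 *m S2 -> X *m S3 = - X.
Proof.
move=> hq h1 h2 h31 hy hb.
have q1 := q1_nz _ _ hq.
rewrite mul_y3gen h2 !mulNmx in hy.
have hZ : X *m S3 *m S2 = q *: (X *m S3) - q ^+ 2 *: X.
  move: hy; move: (X *m S3 *m S2) => Z; move: (X *m S3) => Y hy.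
  apply/rowP => j; move/rowP/(_ j): hy; rewrite !mxE => hy.
  apply/eqP; rewrite -subr_eq0; apply/eqP.
  have : (q + 1) * (Z 0 j - (q * Y 0 j - q ^+ 2 * X 0 j)) = 0.
    by rewrite -hy; ring.
  by move/eqP; rewrite mulf_eq0 (negbTE q1) /= => /eqP.
have hb' := congr1 (mulmx (X *m S3)) hb; rewrite !mulmxA in hb'.
do 4 rewrite ?(mulNmx, mulmxBl, mulmxDl, hZ, h1, h2, h31) -?scalemxAl in hb'.
move: (X *m S3) hb' => Y hb'.
apply/rowP => j; move/rowP/(_ j): hb'; rewrite !mxE => hb'.
have E : (q + q ^+ 2) * Y 0 j - q ^+ 3 * X 0 j = 0.
  by move/eqP: hb'; rewrite -subr_eq0 => /eqP <-; ring.
apply/eqP; rewrite -subr_eq0 opprK; apply/eqP.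
have -> : Y 0 j + X 0 j = - ((q + q ^+ 2) * Y 0 j - q ^+ 3 * X 0 j)
   + (q ^+ 2 + q + 1) * (Y 0 j - (q - 1) * X 0 j) by ring.
by rewrite E hq; ring.
Qed.

Lemma e4 n : (n * (n * n * n) = n * n * n * n)%N. Proof. by rewrite !mulnA. Qed.
Lemma eb n : (n * n * (n * n) = n * n * n * n)%N. Proof. by rewrite !mulnA. Qed.

Definition S1m {F : fieldType} {n : nat} (R : 'M[F]_(n * n)) : 'M[F]_(n * n * n * n) :=
  hR1 R *t (1%:M : 'M[F]_n).
Definition S2m {F : fieldType} {n : nat} (R : 'M[F]_(n * n)) : 'M[F]_(n * n * n * n) :=
  hR2 R *t (1%:M : 'M[F]_n).
Definition S3m {F : fieldType} {n : nat} (R : 'M[F]_(n * n)) : 'M[F]_(n * n * n * n) :=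
  castmx (e4 n, e4 n) ((1%:M : 'M[F]_n) *t hR2 R).

Lemma tensA' (F : comPzRingType) m1 n1 m2 n2 m3 n3
  (A : 'M[F]_(m1,n1)) (B : 'M[F]_(m2,n2)) (C : 'M[F]_(m3,n3)) {e1 e2} :
  A *t (B *t C) = castmx (e1, e2) ((A *t B) *t C).
Proof.
rewrite (@tensA _ _ _ _ _ _ _ A B C (esym e1) (esym e2)) castmx_comp.
by rewrite (castmx_irr _ erefl _ erefl) castmx_id.
Qed.

Lemma castmx0 (F : pzRingType) m n m' n' (e1 : m = m') (e2 : n = n') :
  castmx (e1, e2) (0 : 'M[F]_(m, n)) = 0.
Proof. by apply/matrixP => i j; rewrite castmxE !mxE. Qed.

Lemma L_S2 (F : fieldType) n (R : 'M[F]_(n * n)) :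
  S2m R = castmx (e4 n, e4 n) (1%:M *t hR1 R).
Proof.
have f : (n * (n * n) * n = n * n * n * n)%N by rewrite mulnA.
have g : (n * (n * n * n) = n * (n * n) * n)%N by rewrite !mulnA.
rewrite /S2m /hR2 /hR1 (@castmx_tensl _ _ _ _ _ _ _ _ _ f f _ _).
rewrite (@tensA _ _ _ _ _ _ _ _ _ _ g g) castmx_comp.
exact: castmx_irr.
Qed.

Lemma L_S1 (F : fieldType) n (R : 'M[F]_(n * n)) :
  S1m R = castmx (eb n, eb n) (R *t 1%:M).
Proof. by rewrite /S1m /hR1 (@tensA _ _ _ _ _ _ _ _ _ _ (eb n) (eb n)) tens11. Qed.

Lemma L_S3 (F : fieldType) n (R : 'M[F]_(n * n)) :
  S3m R = castmx (eb n, eb n) (1%:M *t R).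
Proof.
have h : (n * (n * (n * n)) = n * (n * n * n))%N by rewrite !mulnA.
have g : (n * n * (n * n) = n * (n * (n * n)))%N by rewrite !mulnA.
rewrite /S3m /hR2 (@castmx_tensr _ _ _ _ _ _ _ _ _ h h _ _).
rewrite (@tensA' _ _ _ _ _ _ _ _ _ _ g g) !castmx_comp tens11.
exact: castmx_irr.
Qed.

Lemma L_comm (F : fieldType) n (R : 'M[F]_(n * n)) :
  S1m R *m S3m R = S3m R *m S1m R.
Proof.
by rewrite L_S1 L_S3 -!castmx_mulsq !tensmx_mul !mulmx1 !mul1mx.
Qed.

Lemma tens_entry (F : comPzRingType) m k (A : 'rV[F]_m) (B : 'rV[F]_k) i j :
  (A *t B) 0 (mxtens_index (i, j)) = A 0 i * B 0 j.
Proof.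
rewrite mxE mxtens_indexK /=.
by congr (A _ _ * B _ _); apply: val_inj; rewrite /= ?div0n ?mod0n.
Qed.

Lemma blk_tens (F : comPzRingType) m k p (u : 'rV[F]_(m * k)) (v : 'rV[F]_p)
  (e : (m * (k * p) = m * k * p)%N) i :
  blk (castmx (erefl, esym e) (u *t v)) i = blk u i *t v.
Proof.
apply/rowP => j; case: (mxtens_indexP j) => l r.
rewrite tens_entry !mxE castmxE idxA.
have -> : cast_ord (esym (erefl (1 * 1)%N)) 0 = 0 by apply: val_inj.
by rewrite tens_entry.
Qed.

Lemma blk_blk (F : comPzRingType) n (u : 'rV[F]_(n * n * n))
  (e : (n * (n * n) = n * n * n)%N) p a :
  blk (blk (castmx (erefl, esym e) u) p) a = blk u (mxtens_index (p, a)).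
Proof.
apply/rowP => l; rewrite !mxE castmxE esymK.
have -> : cast_ord (esym (erefl 1%N)) 0 = 0 by apply: val_inj.
by rewrite idxA.
Qed.

Lemma tensmx_mulrow (F : comPzRingType) m n p r (A : 'rV[F]_m) (B : 'rV[F]_p)
  (C : 'M[F]_(m, n)) (D : 'M[F]_(p, r)) :
  ((A *t B) : 'rV_(m * p)) *m (C *t D) = (A *m C) *t (B *m D).
Proof. exact (tensmx_mul A B C D). Qed.

Arguments quad_hecke {F k q R}.
Arguments quad_tensl {F k m q A}.
Arguments quad_tensr {F k m q A}.
Arguments quad_cast {F k r e q A}.
Arguments sub_eig {F k q M w}.
Arguments step2 {F k q M1 M2 u}.
Arguments q1_nz {F q}.
Arguments eig_sub {F k q M w}.
Arguments key4 {F k q X S1 S2 S3}.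
Arguments exists_nz {F k u}.
Arguments eig_castL {F k r e X A c}.
Arguments eig_castR {F k r e X A c}.
Arguments blk_eigL {F m k w B c}.
Arguments blk_eigR {F m k w B c}.
Arguments blk_tens {F m k p}.
Arguments blk_blk {F n}.

Theorem corollary2p7 (F : fieldType) (n : nat) (q : F) (R : 'M[F]_(n * n)) :
  (1 < n)%N -> q != 0 -> is_hecke_symmetry q R ->
  \rank (Upsilon3 q R) = 1%N ->
  y3_action q R != 0.
Proof.
move=> n1 q0 [Hbr Hq] Hrk; apply/eqP => Hy0.
have Hy : y3gen q (hR1 R) (hR2 R) = 0 := Hy0.
have qR := quad_hecke Hq.
have qM1 : quad q (hR1 R) := quad_tensl qR.
have qM2 : quad q (hR2 R) := quad_cast (quad_tensr qR).
have Om0 : Upsilon3 q R != 0 by rewrite -mxrank_eq0 Hrk.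
set u := nz_row (Upsilon3 q R).
have u0 : u != 0 by rewrite nz_row_eq0.
have uOm : (u <= Upsilon3 q R)%MS := nz_row_sub _.
have /andP [uA uB] : (u <= hR1 R - q%:M)%MS && (u <= hR2 R - q%:M)%MS.
  by move: uOm; rewrite sub_capmx.
have u1 := sub_eig qM1 uA.
have u2 := sub_eig qM2 uB.
have hq := step2 u0 uA u2 u1 Hy.
have q1 := q1_nz hq.
have inOm (w : 'rV_(n * n * n)) : w *m hR1 R = - w -> w *m hR2 R = - w ->
    (w <= Upsilon3 q R)%MS.
  by move=> h1 h2; rewrite sub_capmx !eig_sub.
have Omu : (Upsilon3 q R <= u)%MS.
  have := mxrank_leqif_sup uOm; rewrite rank_rV u0 Hrk; case=> _ <-; by [].
have K (v : 'rV[F]_n) : (u *t v) *m S3m R = - (u *t v).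
  apply: (key4 (S1 := S1m R) (S2 := S2m R) hq).
  - by rewrite /S1m tensmx_mulrow u1 mulmx1 tensmxNl.
  - by rewrite /S2m tensmx_mulrow u2 mulmx1 tensmxNl.
  - by rewrite -mulmxA -L_comm mulmxA /S1m tensmx_mulrow u1 mulmx1 tensmxNl mulNmx.
  - by rewrite L_S2 /S3m -y3gen_cast -y3gen_tens1 Hy tensmx0 castmx0 mulmx0.
  - by rewrite /S1m /S2m !tensmx_mul !mulmx1 Hbr.
have hB (i : 'I_(n * n)) (v : 'rV[F]_n) : (blk u i *t v) *m R = - (blk u i *t v).
  have := K v; rewrite L_S3 -scaleN1r => /eig_castL /blk_eigL /(_ i).
  by rewrite (blk_tens u v) => ->; rewrite scaleN1r.
have hA (p : 'I_n) : blk (castmx (erefl, esym (mulnA n n n)) u) p *m R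
    = - blk (castmx (erefl, esym (mulnA n n n)) u) p.
  by move: u2; rewrite /hR2 -scaleN1r => /eig_castL /blk_eigL /(_ p) ->; rewrite scaleN1r.
have hC (p : 'I_n) (v : 'rV[F]_n) :
    (blk (castmx (erefl, esym (mulnA n n n)) u) p *t v <= Upsilon3 q R)%MS.
  apply: inOm.
  - by rewrite /hR1 tensmx_mulrow hA mulmx1 tensmxNl.
  - rewrite /hR2 -scaleN1r; apply: eig_castR; apply: blk_eigR => a.
    by rewrite (blk_tens _ v) blk_blk hB scaleN1r.
have [k hk] := exists_nz u0.
pose k' := cast_ord (esym (mulnA n n n)) k.
pose p := (mxtens_unindex k').1; pose j := (mxtens_unindex k').2.
have hD : blk (castmx (erefl, esym (mulnA n n n)) u) p 0 j != 0.
  rewrite mxE castmxE.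
  have -> : cast_ord (esym (erefl 1%N)) 0 = 0 by apply: val_inj.
  have -> : cast_ord (esym (esym (mulnA n n n))) (mxtens_index (p, j)) = k.
    by apply: val_inj; rewrite /= -divn_eq.
  exact: hk.
move: hD (hC p).
move: (blk (castmx (erefl, esym (mulnA n n n)) u) p) => b hD hCb.
pose i0 : 'I_n := Ordinal (ltnW n1).
pose i1 : 'I_n := Ordinal n1.
have [c0 E0] : exists c, (b *t (delta_mx 0 i0 : 'rV_n) : 'rV_(n * n * n)) = c *: u.
  by apply/sub_rVP; apply: submx_trans (hCb _) Omu.
have [c1 E1] : exists c, (b *t (delta_mx 0 i1 : 'rV_n) : 'rV_(n * n * n)) = c *: u.
  by apply/sub_rVP; apply: submx_trans (hCb _) Omu.
have E0a := congr1 (fun w : 'rV[F]_(n * n * n) => w 0 (mxtens_index (j, i0))) E0.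
have E1a := congr1 (fun w : 'rV[F]_(n * n * n) => w 0 (mxtens_index (j, i0))) E1.
have E1b := congr1 (fun w : 'rV[F]_(n * n * n) => w 0 (mxtens_index (j, i1))) E1.
move: E0a E1a E1b; rewrite /= !tens_entry !mxE /= mulr1 mulr0 => E0a E1a E1b.
have c1nz : c1 != 0.
  by apply: contraNneq hD => c10; rewrite E1b c10 mul0r.
move/esym/eqP: E1a; rewrite mulf_eq0 (negbTE c1nz) /= => /eqP u00.
by move: hD; rewrite E0a u00 mulr0 eqxx.
Qed.
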